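(* Let $G=(V,E)$ be a finite connected graph with arc set $A$. (a) Let $w_1:A\to\mathbb{C}$ with $\sum_{e:\,o(e)=u}|w_1(e)|^2=1$ for all $u\in V$, and let $(U_1\psi)(e)=\sum_{f:\,t(f)=o(e)}\big(2w_1(e)\overline{w_1(\bar f)}-\delta_{e,\bar f}\big)\psi(f)$ on functions $\psi:A\to\mathbb{C}$. Let $T$ be the operator on functions on $V$ given by $(Tf)(u)=\sum_{e:\,o(e)=u}w_1(e)\overline{w_1(\bar e)}f(t(e))$, and $\varphi_1(x)=(x+x^{-1})/2$. For $s\in\{1,-1\}$ put $n_s=|E|-|V|+\mathbf{1}_{\{s\in\sigma(T)\}}$. Then $\sigma(U_1)=\varphi_1^{-1}(\sigma(T))\cup\{1:n_1>0\}\cup\{-1:n_{-1}>0\}$ (i.e., $1$ is added iff $n_1>0$ and $-1$ is added iff $n_{-1}>0$). (b) Let $w_2:A\to(0,\infty)$ with $\sum_{e:\,o(e)=u}w_2(e)=1$ for all $u\in V$, and suppose there is $m_V:V\to(0,\infty)$ with $m_V(o(e))w_2(e)=m_V(t(e))w_2(\bar e)$ for all $e\in A$. Let $(U_2\psi)(e)=\sum_{f:\,t(f)=o(e)}\big(2w_2(\bar f)-\delta_{e,\bar f}\big)\psi(f)$, let $(Lf)(u)=\sum_{e:\,o(e)=u}w_2(e)f(t(e))-f(u)$, and $\varphi_2(x)=(x+x^{-1})/2-1$. Then $\sigma(U_2)=\varphi_2^{-1}(\sigma(L))$ if $G$ is a tree; $\sigma(U_2)=\varphi_2^{-1}(\sigma(L))\cup\{1\}$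 if $G$ has exactly one cycle and is not bipartite; and $\sigma(U_2)=\varphi_2^{-1}(\sigma(L))\cup\{1,-1\}$ otherwise.
   Context: $A=\{(u,v):\{u,v\}\in E\}$; for $e=(u,v)$, $o(e)=u$, $t(e)=v$, $\bar e=(v,u)$. $\delta$ is the Kronecker delta, $\mathbf{1}$ an indicator, $\sigma(\cdot)$ the spectrum (set of eigenvalues), and for a function $\varphi$ and set $X$, $\varphi^{-1}(X)=\{x\in\mathbb{C}\setminus\{0\}:\varphi(x)\in X\}$. ''Exactly one cycle'' means $|E|=|V|$ for the connected graph $G$. *)

(* Defs.v *)
From HB Require Import structures.
From mathcomp Require Import all_boot all_order all_algebra.
From mathcomp Require Import complex.
From mathcomp Require Import reals.
Set Implicit Arguments. Unset Strict Implicit. Unset Printing Implicit Defensive.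
Import Order.TTheory GRing.Theory Num.Theory.
Local Open Scope ring_scope.
Local Open Scope complex_scope.

Definition simple_graph (V : finType) (adj : rel V) :=
  symmetric adj /\ irreflexive adj.

Definition connected_graph (V : finType) (adj : rel V) :=
  (0 < #|V|)%N /\ forall x y : V, connect adj x y.

(* Arc set A = {(u,v) : {u,v} in E}. o(e) = (val e).1, t(e) = (val e).2,
   and the reversed arc of e is ((val e).2, (val e).1). *)
Definition garc (V : finType) (adj : rel V) := {p : (V * V)%type | adj p.1 p.2}.

Definition edges (V : finType) (adj : rel V) : {set {set V}} :=
  [set [set x; y] | x in V, y in V & adj x y].

Definition bipartite (V : finType) (adj : rel V) :=
  exists c : V -> bool, forall x y, adj x y -> c x != c y.

(* Matrix of the linear operator (K psi)(i) = sum_j K i j psi(j) on functions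
   X -> F, in the basis of indicator functions enumerated by enum X. *)
Definition opmx (F : fieldType) (X : finType) (K : X -> X -> F) : 'M[F]_#|X| :=
  \matrix_(i, j) K (enum_val i) (enum_val j).

Definition spectrum (F : fieldType) (X : finType) (K : X -> X -> F) : pred F :=
  fun a => eigenvalue (opmx K) a.

Definition preim_nz (F : fieldType) (phi : F -> F) (S : pred F) : pred F :=
  fun x => (x != 0) && S (phi x).

Section Ops.
Variables (R : realType) (V : finType) (adj : rel V).
Local Notation C := R[i].
Local Notation A := (garc adj).

Definition U1_kernel (w : V -> V -> C) (e f : A) : C :=
  if (val f).2 == (val e).1 then
    2 * w (val e).1 (val e).2 * conjc (w (val f).2 (val f).1)
    - ((val e == ((val f).2, (val f).1)) %:R)
  else 0.

Definition T_kernel (w : V -> V -> C) (u v : V) : C :=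
  \sum_(e : A | ((val e).1 == u) && ((val e).2 == v))
     w (val e).1 (val e).2 * conjc (w (val e).2 (val e).1).

Definition phi1 (x : C) : C := (x + x^-1) / 2.

Definition U2_kernel (w : V -> V -> R) (e f : A) : C :=
  if (val f).2 == (val e).1 then
    2 * (w (val f).2 (val f).1)%:C - ((val e == ((val f).2, (val f).1)) %:R)
  else 0.

Definition L_kernel (w : V -> V -> R) (u v : V) : C :=
  (\sum_(e : A | ((val e).1 == u) && ((val e).2 == v)) (w (val e).1 (val e).2)%:C)
  - (u == v)%:R.

Definition phi2 (x : C) : C := (x + x^-1) / 2 - 1.
End Ops.

Arguments U1_kernel {R V} adj w e f.
Arguments U2_kernel {R V} adj w e f.
Arguments T_kernel {R V} adj w u v.
Arguments L_kernel {R V} adj w u v.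

(* Main.v *)
Require Import Defs.
From HB Require Import structures.
From mathcomp Require Import all_boot all_order all_algebra.
From mathcomp Require Import complex.
From mathcomp Require Import reals.
From mathcomp Require Import ring zify.
Import Order.TTheory GRing.Theory Num.Theory.
Local Open Scope ring_scope.
Set Implicit Arguments. Unset Strict Implicit. Unset Printing Implicit Defensive.

Section Spec.
Variables (F : fieldType) (X : finType).

Lemma sum_enum (G : X -> F) : \sum_(k < #|X|) G (enum_val k) = \sum_i G i.
Proof.
by rewrite (reindex (@enum_rank X)) /=; [apply: eq_bigr => i _; rewrite enum_rankK|
  exists (@enum_val _ _) => i _; [rewrite enum_rankK | rewrite enum_valK]].
Qed.

Lemma spec_left (K : X -> X -> F) a :
  spectrum K a <-> exists g : X -> F, (exists x, g x != 0) /\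
     forall j, \sum_i g i * K i j = a * g j.
Proof.
rewrite /spectrum; split.
  move/eigenvalueP=> [v Hv /rV0Pn [k Hk]].
  exists (fun x => v 0 (enum_rank x)); split.
    by exists (enum_val k); rewrite enum_valK.
  move=> j; move/rowP: Hv => /(_ (enum_rank j)).
  rewrite !mxE /= => <-.
  rewrite -sum_enum; apply: eq_bigr => i _; rewrite !mxE enum_valK enum_rankK //.
move=> [g [[x Hx] Hg]]; apply/eigenvalueP.
exists (\row_k g (enum_val k)).
  apply/rowP => j; rewrite !mxE -Hg -sum_enum; apply: eq_bigr => i _.
  by rewrite !mxE.
by apply/rV0Pn; exists (enum_rank x); rewrite mxE enum_rankK.
Qed.

Lemma spec_tr (K : X -> X -> F) a :
  spectrum K a <-> spectrum (fun i j => K j i) a.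
Proof.
suff H : forall K : X -> X -> F, spectrum K a -> spectrum (fun i j => K j i) a.
  by split => //; move/H.
move=> K0; rewrite /spectrum /eigenvalue /eigenspace !kermx_eq0 /row_free.
have -> : opmx (fun i j => K0 j i) - a%:M = (opmx K0 - a%:M)^T.
  by apply/matrixP => i j; rewrite !mxE eq_sym.
by rewrite mxrank_tr.
Qed.

Lemma spec_right (K : X -> X -> F) a :
  spectrum K a <-> exists g : X -> F, (exists x, g x != 0) /\
     forall i, \sum_j K i j * g j = a * g i.
Proof.
rewrite spec_tr spec_left; split => -[g [Hx Hg]]; exists g; split => // i;
  rewrite -Hg; apply: eq_bigr => j _; exact: mulrC.
Qed.
End Spec.

Section Rank.
Variables (F : fieldType) (X Y : finType) (P : pred X) (K : Y -> X -> F).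

Lemma kernel_lemma :
  (#|Y| < #|P|)%N -> exists v : X -> F, (exists2 x, P x & v x != 0) /\
     forall y, \sum_(x | P x) K y x * v x = 0.
Proof.
move=> HYP.
pose Km : 'M[F]_(#|P|, #|Y|) := \matrix_(i, j) K (enum_val j) (enum_val i).
have nfree : ~~ row_free Km.
  rewrite /row_free neq_ltn; apply/orP; left.
  exact: leq_ltn_trans (rank_leq_col Km) HYP.
have : kermx Km != 0 by rewrite kermx_eq0.
rewrite -nz_row_eq0 => nz.
have uK : nz_row (kermx Km) *m Km = 0 by apply/sub_kermxP; exact: nz_row_sub.
move: nz uK; set u := nz_row _ => /rV0Pn [i0 Hi0] uK.
have x0P : enum_val i0 \in P by exact: enum_valP.
exists (fun x => if x \in P then u 0 (enum_rank_in x0P x) else 0); split.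
  by exists (enum_val i0); [exact: enum_valP | rewrite x0P enum_valK_in].
move=> y; move/rowP: uK => /(_ (enum_rank y)); rewrite !mxE => H.
rewrite -[RHS]H.
rewrite (eq_bigl (fun x => x \in P)) // (big_enum_val (A:=P)) /=.
apply: eq_bigr => i _; rewrite enum_valP enum_valK_in !mxE enum_rankK mulrC //.
Qed.

Lemma rank_lemma (Q : pred Y) :
  (forall g : Y -> F, (forall y, ~~ Q y -> g y = 0) ->
     (forall x, P x -> \sum_y g y * K y x = 0) -> forall y, g y = 0) ->
  (#|Q| <= #|P|)%N /\
  (forall v : X -> F, (exists2 x, P x & v x != 0) ->
      (forall y, Q y -> \sum_(x | P x) K y x * v x = 0) -> (#|Q| < #|P|)%N).
Proof.
move=> Hg.
pose Km : 'M[F]_(#|P|, #|Q|) := \matrix_(i, j) K (enum_val j) (enum_val i).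
have rk : \rank Km = #|Q|.
  rewrite -mxrank_tr; apply/eqP; rewrite -/(row_free _) -kermx_eq0.
  apply/negPn/negP; rewrite -nz_row_eq0 => nz.
  have uK : nz_row (kermx Km^T) *m Km^T = 0 by apply/sub_kermxP; exact: nz_row_sub.
  move: nz uK; set z := nz_row _ => /rV0Pn [j0 Hj0] uK.
  have y0Q : enum_val j0 \in Q by exact: enum_valP.
  pose g y := if y \in Q then z 0 (enum_rank_in y0Q y) else 0.
  suff Hg0 : forall y, g y = 0.
    by move: (Hg0 (enum_val j0)); rewrite /g y0Q enum_valK_in => /eqP; rewrite (negPf Hj0).
  apply: Hg; first by move=> y Hy; rewrite /g ifF //; apply: negbTE.
  move=> x Px; have x0P : x \in P by [].
  move/rowP: uK => /(_ (enum_rank_in x0P x)); rewrite !mxE => H.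
  rewrite -[RHS]H (bigID (fun y => y \in Q)) /= [X in _ + X]big1 ?addr0; last first.
    by move=> y Hy; rewrite /g ifF ?mul0r //; apply: negbTE.
  rewrite (eq_bigl (fun y => y \in Q)) // (big_enum_val (A:=Q)) /=.
  apply: eq_bigr => i _; rewrite /g enum_valP enum_valK_in !mxE enum_rankK_in //.
split; first by rewrite -rk rank_leq_row.
move=> v [x0 Px0 Hx0] Hv.
have nfree : ~~ row_free Km.
  rewrite -kermx_eq0; apply/negP => /eqP K0.
  have : ((\row_i v (enum_val i)) <= kermx Km)%MS.
    apply/sub_kermxP/rowP => j; rewrite !mxE -[RHS](Hv (enum_val j)); last exact: enum_valP.
    rewrite (eq_bigl (fun x => x \in P)) // (big_enum_val (A:=P)) /=.
    by apply: eq_bigr => i _; rewrite !mxE mulrC.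
  rewrite K0 submx0 => /eqP/rowP/(_ (enum_rank_in Px0 x0)).
  by rewrite !mxE enum_rankK_in //; apply/eqP.
by rewrite -rk ltn_neqAle nfree rank_leq_row.
Qed.
End Rank.

Section Arcs.
Variables (V : finType) (adj : rel V) (Hsym : symmetric adj).
Local Notation A := (garc adj).

Definition ao (e : A) := (val e).1.
Definition at_ (e : A) := (val e).2.

Lemma arev_pf (e : A) : adj (val e).2 (val e).1.
Proof. by rewrite Hsym; exact: (valP e). Qed.

Definition arev (e : A) : A := exist (fun p => adj p.1 p.2) ((val e).2, (val e).1) (arev_pf e).

Lemma arevK : involutive arev.
Proof. by move=> e; apply: val_inj => /=; case: (val e). Qed.

Lemma ao_rev e : ao (arev e) = at_ e. Proof. by []. Qed.
Lemma at_rev e : at_ (arev e) = ao e. Proof. by []. Qed.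

Lemma sum_rev (F : nmodType) (P : pred A) (G : A -> F) :
  \sum_(e | P e) G e = \sum_(e | P (arev e)) G (arev e).
Proof. exact: (reindex_inj (inv_inj arevK)). Qed.

Section Core.
Variables (F : fieldType) (H2 : (2 : F) != 0) (c a : A -> F).
Hypothesis Hdd : forall u, \sum_(e | ao e == u) c e * a e = 1.

Definition dop (psi : A -> F) u := \sum_(e | ao e == u) c e * psi e.
Definition Uop (psi : A -> F) e := 2 * a e * dop (fun f => psi (arev f)) (ao e) - psi (arev e).
Definition Mop (g : V -> F) u := \sum_(e | ao e == u) c e * a (arev e) * g (at_ e).
Definition phig (x : F) := (x + x^-1) / 2.

Lemma dop_Uop psi u : dop (Uop psi) u = dop (fun f => psi (arev f)) u.
Proof.
rewrite /dop /Uop.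
transitivity (\sum_(e | ao e == u) (2 * dop (fun f => psi (arev f)) u * (c e * a e))
   - \sum_(e | ao e == u) c e * psi (arev e)).
  rewrite -sumrB; apply: eq_bigr => e /eqP <-; rewrite /dop; ring.
by rewrite -mulr_sumr Hdd mulr1 /dop; ring.
Qed.

Lemma dop_Uop_rev psi u :
  dop (fun f => Uop psi (arev f)) u =
  2 * Mop (dop (fun f => psi (arev f))) u - dop psi u.
Proof.
rewrite /dop /Uop /Mop mulr_sumr -sumrB; apply: eq_bigr => e _.
rewrite arevK ao_rev /dop; ring.
Qed.

Lemma core_fwd x psi : (exists e, psi e != 0) -> (forall e, Uop psi e = x * psi e) ->
  (x != 0 /\ exists g, (exists u, g u != 0) /\ forall u, Mop g u = phig x * g u) \/
  ((x = 1 \/ x = -1) /\ (forall e, psi (arev e) = - x * psi e) /\ forall u, dop psi u = 0).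
Proof.
move=> [e0 He0] HU.
set a' := dop psi; set b := dop (fun f => psi (arev f)).
have Hb : forall u, b u = x * a' u.
  move=> u; rewrite /b -dop_Uop /a' /dop mulr_sumr; apply: eq_bigr => e _.
  by rewrite HU; ring.
have HM : forall u, 2 * Mop b u - a' u = x * b u.
  move=> u; rewrite /b /a' -dop_Uop_rev /dop mulr_sumr; apply: eq_bigr => e _.
  by rewrite HU; ring.
have [a0|[u0 Hu0]] : (forall u, a' u = 0) \/ exists u, a' u != 0.
  case: (boolP [forall u, a' u == 0]) => [/forallP H|/forallPn [u Hu]].
    by left => u; apply/eqP.
  by right; exists u.
  have Hr : forall e, psi (arev e) = - x * psi e.
    move=> e; have := HU e; rewrite /Uop.
    have -> : dop (fun f => psi (arev f)) (ao e) = 0 by rewrite -/b Hb a0 mulr0.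
    by move=> H; rewrite mulNr -H; ring.
  right; split; last by split.
  have : (x ^+ 2 - 1) * psi e0 = 0.
    have := Hr (arev e0); rewrite arevK Hr => H.
    by rewrite mulrBl mul1r {2}H; ring.
  move/eqP; rewrite mulf_eq0 (negPf He0) orbF subr_eq0 sqrf_eq1.
  by case/orP => /eqP ->; [left|right].
left.
have xnz : x != 0.
  apply: contraNneq He0 => x0.
  have := HU (arev e0); rewrite /Uop x0 mul0r arevK.
  have -> : dop (fun f => psi (arev f)) (ao (arev e0)) = 0 by rewrite -/b Hb x0 mul0r.
  by rewrite mulr0 sub0r => /eqP; rewrite oppr_eq0.
split => //; exists a'; split; first by exists u0.
move=> u; have := HM u.
have -> : Mop b u = x * Mop a' u.
  rewrite /Mop mulr_sumr; apply: eq_bigr => e _; rewrite Hb; ring.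
rewrite Hb => H.
have H' : (2 * x) * Mop a' u = (2 * x) * (phig x * a' u).
  transitivity (x * (x * a' u) + a' u); first by rewrite -H; ring.
  rewrite /phig; field; by rewrite ?H2 ?xnz.
by move: H'; apply: mulfI; rewrite mulf_neq0.
Qed.

Lemma exists_nz_of_sum (P : pred A) (G : A -> F) :
  \sum_(e | P e) G e != 0 -> exists e, G e != 0.
Proof.
move=> H; case: (boolP [forall e, G e == 0]) => [/forallP Z|/forallPn [e He]].
  by move: H; rewrite big1 ?eqxx // => e _; apply/eqP.
by exists e.
Qed.

Lemma core_bwd1 x g : x != 0 -> (exists u, g u != 0) ->
  (forall u, Mop g u = phig x * g u) ->
  exists psi, (exists e, psi e != 0) /\ forall e, Uop psi e = x * psi e.
Proof.
move=> xnz [u0 Hu0] HM.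
pose psi1 e := a e * g (ao e).
have dpsi1 : forall u, dop psi1 u = g u.
  move=> u; rewrite /dop /psi1 -[RHS]mul1r -(Hdd u) mulr_suml.
  by apply: eq_bigr => e /eqP <-; ring.
pose psi0 e := psi1 e - x^-1 * psi1 (arev e).
have dSpsi0 : forall u, dop (fun f => psi0 (arev f)) u = Mop g u - x^-1 * g u.
  move=> u; rewrite -(dpsi1 u) /dop /Mop.
  rewrite mulr_sumr -sumrB; apply: eq_bigr => e _; rewrite /psi0 /psi1 arevK ao_rev; ring.
case: (boolP [exists e, psi0 e != 0]) => [/existsP [e He]|/existsPn Z].
  exists psi0; split; first by exists e.
  move=> f; rewrite /Uop dSpsi0 HM {1}/psi0 arevK /psi0 /psi1 /phig ao_rev.
  field; by rewrite ?H2 ?xnz.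
have Z' : forall e, psi1 (arev e) = x * psi1 e.
  move=> e; move: (Z e); rewrite negbK /psi0 subr_eq0 => /eqP ->.
  by rewrite mulrA mulfV // mul1r.
exists psi1; split.
  have : dop psi1 u0 != 0 by rewrite dpsi1.
  move/exists_nz_of_sum => [e]; rewrite mulf_eq0 negb_or => /andP [_ H]; by exists e.
move=> e; rewrite /Uop Z'.
have -> : dop (fun f => psi1 (arev f)) (ao e) = x * g (ao e).
  rewrite -dpsi1 /dop mulr_sumr; apply: eq_bigr => f _; rewrite Z'; ring.
by rewrite /psi1; ring.
Qed.

Lemma core_bwd2 x psi :
  (forall e, psi (arev e) = - x * psi e) -> (forall u, dop psi u = 0) ->
  forall e, Uop psi e = x * psi e.
Proof.
move=> Hr Hd e; rewrite /Uop Hr.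
have -> : dop (fun f => psi (arev f)) (ao e) = 0.
  rewrite /dop (eq_bigr (fun f => - x * (c f * psi f))); last by move=> f _; rewrite Hr; ring.
  by rewrite -mulr_sumr -/(dop psi _) Hd mulr0.
ring.
Qed.

End Core.
End Arcs.


Section Pos.
Variables (V : finType) (adj : rel V) (Hsym : symmetric adj) (Hirr : irreflexive adj).
Local Notation A := (garc adj).
Local Notation arev := (arev Hsym).

Definition pos (e : A) := (nat_of_ord (enum_rank (ao e)) < enum_rank (at_ e))%N.

Lemma ao_neq (e : A) : ao e != at_ e.
Proof. rewrite /ao /at_; apply/negP => /eqP H; move: (valP e); by rewrite /= H Hirr. Qed.

Lemma pos_rev e : pos (arev e) = ~~ pos e.
Proof.
have Hne : (nat_of_ord (enum_rank (at_ e)) != enum_rank (ao e)).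
  by rewrite val_eqE (inj_eq (@enum_rank_inj V)) eq_sym ao_neq.
by rewrite /pos ao_rev at_rev -leqNgt ltn_neqAle Hne.
Qed.

Lemma card_edges : #|edges adj| = #|[pred e : A | pos e]|.
Proof.
have -> : edges adj = [set [set ao e; at_ e] | e in [pred e : A | pos e]].
  apply/setP => S; apply/imset2P/imsetP.
    move=> [x y _]; rewrite inE => Hxy ->.
    have [Hlt|] := ltnP (enum_rank x) (enum_rank y).
      by exists (exist (fun p => adj p.1 p.2) (x, y) Hxy).
    rewrite leq_eqVlt => /orP [/eqP /val_inj /enum_rank_inj Hyx|Hlt].
      by move: Hxy; rewrite Hyx Hirr.
    have Hyx : adj y x by rewrite Hsym.
    by exists (exist (fun p => adj p.1 p.2) (y, x) Hyx) => //; rewrite setUC.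
  move=> [e _ ->]; exists (ao e) (at_ e) => //; rewrite inE; exact: (valP e).
apply: card_in_imset => e1 e2; rewrite !inE /pos => H1 H2 Heq.
have m1 : ao e1 \in [set ao e2; at_ e2] by rewrite -Heq set21.
have m2 : at_ e1 \in [set ao e2; at_ e2] by rewrite -Heq set22.
have Hv : val e1 = val e2.
  rewrite [val e1]surjective_pairing [val e2]surjective_pairing -/(ao e1) -/(at_ e1) -/(ao e2) -/(at_ e2).
  move: m1 m2; rewrite !inE => /orP [/eqP a1|/eqP a1] /orP [/eqP a2|/eqP a2].
  - by move: (ao_neq e1); rewrite a1 a2 eqxx.
  - by rewrite a1 a2.
  - by move: H1 H2; rewrite a1 a2 => H1 H2; move: (ltn_trans H1 H2); rewrite ltnn.
  - by move: (ao_neq e1); rewrite a1 a2 eqxx.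
exact: val_inj.
Qed.

Section Split.
Variables (F : fieldType) (c : A -> F) (s : F).

Definition Nk (u : V) (e : A) : F :=
  (ao e == u)%:R * c e - s * (at_ e == u)%:R * c (arev e).

Lemma dop_split psi u : (forall e, psi (arev e) = - s * psi e) ->
  dop c psi u = \sum_(e | pos e) Nk u e * psi e.
Proof.
move=> Hr; rewrite /dop big_mkcond (bigID pos) /=.
rewrite (sum_rev Hsym (fun e => ~~ pos e)) /=.
rewrite [X in _ + X](eq_bigl pos); last by move=> e; rewrite pos_rev negbK.
rewrite -big_split /=; apply: eq_bigr => e _.
rewrite /Nk ao_rev Hr; case: (ao e == u); case: (at_ e == u); rewrite /= ?mul0r ?mul1r; ring.
Qed.
End Split.
End Pos.

Section Count.
Variables (V : finType) (adj : rel V) (Hsym : symmetric adj) (Hirr : irreflexive adj).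
Local Notation A := (garc adj).
Local Notation arev := (arev Hsym).
Local Notation pos := (@pos V adj).
Variables (F : fieldType) (c : A -> F) (s : F) (Hs : s * s = 1).
Local Notation Nk := (Nk Hsym c s).

Lemma sum_delta (g : V -> F) z : \sum_y g y * (z == y)%:R = g z.
Proof.
rewrite (bigD1 z) //= eqxx mulr1 big1 ?addr0 // => y Hy.
by rewrite eq_sym (negPf Hy) mulr0.
Qed.

Lemma sum_Nk (g : V -> F) x :
  \sum_y g y * Nk y x = g (ao x) * c x - s * g (at_ x) * c (arev x).
Proof.
rewrite /Nk.
transitivity (\sum_y (g y * (ao x == y)%:R) * c x - \sum_y (s * (g y * (at_ x == y)%:R)) * c (arev x)).
  rewrite -sumrB; apply: eq_bigr => y _.
  by rewrite (eq_sym (ao x)) (eq_sym (at_ x)); ring.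
by rewrite -!mulr_suml -mulr_sumr !sum_delta.
Qed.

Lemma Z_of_big : (#|V| < #|edges adj|)%N ->
  exists psi : A -> F, (exists e, psi e != 0) /\
     (forall e, psi (arev e) = - s * psi e) /\ forall u, dop c psi u = 0.
Proof.
rewrite (card_edges Hsym Hirr) => Hlt.
have [v [[x0 Px0 Hx0] Hv]] := kernel_lemma Nk Hlt.
pose psi e := if pos e then v e else - s * v (arev e).
have Hr : forall e, psi (arev e) = - s * psi e.
  move=> e; rewrite /psi pos_rev //; case He: (pos e) => /=.
    by rewrite arevK.
  by rewrite mulrA mulrNN Hs mul1r.
have Px0' : pos x0 := Px0.
exists psi; split; first by exists x0; rewrite /psi Px0'.
split => // u; rewrite (dop_split Hirr c u Hr) -[RHS](Hv u).
by apply: eq_bigr => e He; rewrite /psi (_ : pos e = true).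
Qed.

Lemma big_of_Z :
  (forall g : V -> F, (forall e, g (ao e) * c e = s * g (at_ e) * c (arev e)) ->
      forall u, g u = 0) ->
  (exists psi : A -> F, (exists e, psi e != 0) /\
     (forall e, psi (arev e) = - s * psi e) /\ forall u, dop c psi u = 0) ->
  (#|V| < #|edges adj|)%N.
Proof.
move=> Hg [psi [[e0 He0] [Hr Hd]]].
rewrite (card_edges Hsym Hirr).
have snz : s != 0.
  by apply/eqP => s0; move: Hs; rewrite s0 mul0r => /eqP; rewrite eq_sym oner_eq0.
have Hlk : forall g : V -> F, (forall y, ~~ predT y -> g y = 0) ->
     (forall x, [pred e | pos e] x -> \sum_y g y * Nk y x = 0) -> forall y, g y = 0.
  move=> g _ Hk; apply: Hg => e.
  case Pe: (pos e).
    by move: (Hk e Pe); rewrite sum_Nk => /eqP; rewrite subr_eq0 => /eqP ->; ring.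
  have Pre : pos (arev e) by rewrite pos_rev // Pe.
  move: (Hk _ Pre); rewrite sum_Nk ao_rev at_rev arevK => /eqP; rewrite subr_eq0 => /eqP H.
  by rewrite -mulrA H !mulrA Hs mul1r.
have [_ H] := rank_lemma Hlk.
apply: (H psi).
  case Pe: (pos e0); first by exists e0.
  exists (arev e0); first by rewrite /= pos_rev // Pe.
  by rewrite Hr mulf_neq0 // oppr_eq0.
by move=> y _; rewrite -(dop_split Hirr c y Hr).
Qed.
End Count.

Section Tree.
Variables (V : finType) (adj : rel V) (Hsym : symmetric adj) (Hirr : irreflexive adj).
Local Notation A := (garc adj).

Lemma const_connect (X : eqType) (g : V -> X) : (forall e : A, g (ao e) = g (at_ e)) ->
  forall x y, connect adj x y -> g x = g y.
Proof.
move=> Hg x y Hc.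
have cl : closed adj [pred z | g z == g x].
  move=> z1 z2 Hz; rewrite !inE.
  by have := Hg (exist (fun p => adj p.1 p.2) (z1, z2) Hz) => /= ->.
by have := closed_connect cl Hc; rewrite !inE eqxx => /esym/eqP.
Qed.

Lemma tree_bound (F : fieldType) : (0 < #|V|)%N -> (forall x y, connect adj x y) ->
  (#|V| <= #|edges adj| + 1)%N.
Proof.
move=> /card_gt0P [r _] Hc.
rewrite (card_edges Hsym Hirr).
have Hlk : forall g : V -> F, (forall y, ~~ predC1 r y -> g y = 0) ->
     (forall x, [pred e | pos e] x -> \sum_y g y * Nk Hsym (fun _ => (1 : F)) 1 y x = 0) ->
     forall y, g y = 0.
  move=> g Hr Hk.
  have Hg : forall e : A, g (ao e) = g (at_ e).
    move=> e; have := sum_Nk Hsym (fun _ => (1:F)) 1 g.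
    case Pe: (pos e).
      by move=> /(_ e); rewrite (Hk e Pe) => /esym/eqP; rewrite subr_eq0 !mulr1 mul1r => /eqP.
    have Pre : pos (arev Hsym e) by rewrite pos_rev // Pe.
    move=> /(_ (arev Hsym e)); rewrite (Hk _ Pre) ao_rev at_rev => /esym/eqP.
    by rewrite subr_eq0 !mulr1 mul1r => /eqP.
  move=> y; rewrite (const_connect Hg (Hc y r)); apply: Hr; by rewrite /= negbK.
have [H _] := rank_lemma Hlk.
by move: H; rewrite cardC1 addn1; case: #|V| => //= n H; rewrite ltnS.
Qed.
End Tree.

Section Bridge.
Variables (V : finType) (adj : rel V) (Hsym : symmetric adj).
Local Notation A := (garc adj).
Local Notation arev := (arev Hsym).
Variable (F : fieldType).

Lemma kernel_sum (X : A -> F) (psi : A -> F) e :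
  \sum_f (if (val f).2 == (val e).1 then X f - (val e == ((val f).2, (val f).1))%:R else 0) * psi f
  = \sum_(g | ao g == ao e) X (arev g) * psi (arev g) - psi (arev e).
Proof.
transitivity (\sum_f (if (val f).2 == (val e).1 then X f * psi f else 0)
              - \sum_f (f == arev e)%:R * psi f).
  rewrite -sumrB; apply: eq_bigr => f _.
  have -> : (val e == ((val f).2, (val f).1)) = (f == arev e).
    rewrite -val_eqE /=; move: (val e) (val f) => [a b] [c d] /=.
    by rewrite !xpair_eqE andbC (eq_sym a) (eq_sym b).
  case: ifP => H; first by ring.
  case: eqP => Hf; last by rewrite mul0r subr0.
  by move: H; rewrite Hf /= eqxx.
congr (_ - _).
  rewrite -big_mkcond (sum_rev Hsym) /=.
  by apply: eq_bigl => g.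
rewrite (bigD1 (arev e)) //= eqxx mul1r big1 ?addr0 // => f /negPf ->; exact: mul0r.
Qed.

Lemma partition_sum (g : V -> F) (H : A -> F) (P : pred A) :
  \sum_u g u * \sum_(e | ((val e).1 == u) && P e) H e = \sum_(e | P e) g (ao e) * H e.
Proof.
rewrite (partition_big (fun e => ao e) predT) //=.
apply: eq_bigr => u _; rewrite mulr_sumr; apply: eq_big.
  by move=> e; rewrite andbC.
by move=> e /andP [/eqP <- _].
Qed.

Lemma partition_sum2 (g : V -> F) (H : A -> F) u :
  \sum_v (\sum_(e | ((val e).1 == u) && ((val e).2 == v)) H e) * g v
  = \sum_(e | ao e == u) H e * g (at_ e).
Proof.
rewrite (partition_big (fun e => at_ e) predT (P := fun e => ao e == u)) //=.
apply: eq_bigr => v _; rewrite mulr_suml; apply: eq_big => //.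
by move=> e /andP [_ /eqP <-].
Qed.
End Bridge.

Section CoreIff.
Variables (V : finType) (adj : rel V) (Hsym : symmetric adj).
Local Notation A := (garc adj).
Variables (F : fieldType) (H2 : (2 : F) != 0) (c a : A -> F).
Hypothesis Hdd : forall u, \sum_(e | ao e == u) c e * a e = 1.

Lemma core_iff x :
  (exists psi, (exists e, psi e != 0) /\ forall e, Uop Hsym c a psi e = x * psi e) <->
  (x != 0 /\ exists g, (exists u, g u != 0) /\ forall u, Mop Hsym c a g u = phig x * g u) \/
  ((x = 1 \/ x = -1) /\ exists psi, (exists e, psi e != 0) /\
     (forall e, psi (arev Hsym e) = - x * psi e) /\ forall u, dop c psi u = 0).
Proof.
split.
  move=> [psi [Hnz HU]]; case: (core_fwd H2 Hdd Hnz HU) => [H|[Hx [Hr Hd]]]; first by left.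
  by right; split => //; exists psi.
move=> [[xnz [g [Hg HM]]]|[Hx [psi [Hnz [Hr Hd]]]]].
  exact: (core_bwd1 H2 Hdd xnz Hg HM).
by exists psi; split => //; apply: core_bwd2.
Qed.
End CoreIff.

Section PartA.
Local Open Scope complex_scope.
Variables (R : realType) (V : finType) (adj : rel V) (Hsym : symmetric adj) (Hirr : irreflexive adj).
Local Notation A := (garc adj).
Local Notation C := R[i].
Variable (w1 : V -> V -> C).
Hypothesis Hw : forall u : V,
        \sum_(e : garc adj | (val e).1 == u) `|w1 (val e).1 (val e).2| ^+ 2 = 1.

Let c := fun e : A => (w1 (ao e) (at_ e))^*.
Let a := fun e : A => w1 (ao e) (at_ e).

Lemma H2C : (2 : C) != 0. Proof. by rewrite pnatr_eq0. Qed.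

Lemma HddA u : \sum_(e | ao e == u) c e * a e = 1.
Proof. rewrite -(Hw u); apply: eq_bigr => e _; by rewrite sqr_normc mulrC. Qed.

Lemma U1_sum psi e : \sum_f U1_kernel adj w1 e f * psi f = Uop Hsym c a psi e.
Proof.
rewrite /U1_kernel (kernel_sum Hsym (fun f => 2 * w1 (val e).1 (val e).2 * (w1 (val f).2 (val f).1)^*)).
rewrite /Uop /dop mulr_sumr; congr (_ - _); apply: eq_bigr => g _ /=.
rewrite /c /a /ao /at_ /=; ring.
Qed.

Lemma specU1 x : spectrum (U1_kernel adj w1) x <->
  exists psi, (exists e, psi e != 0) /\ forall e, Uop Hsym c a psi e = x * psi e.
Proof.
rewrite spec_right; split => -[psi [Hnz H]]; exists psi; split => // e;
  by rewrite -?H U1_sum ?H.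
Qed.

Lemma specT mu : spectrum (T_kernel adj w1) mu <->
  exists g, (exists u, g u != 0) /\ forall u, Mop Hsym c a g u = mu * g u.
Proof.
have E : forall g u, \sum_i g i * T_kernel adj w1 i u = Mop Hsym c a g u.
  move=> g u; rewrite /T_kernel partition_sum.
  rewrite (sum_rev Hsym) /Mop; apply: eq_bigr => e _; rewrite /c /a /=; ring.
rewrite spec_left; split => -[g [Hnz H]]; exists g; split => // u;
  by rewrite -?H E ?H.
Qed.

Lemma Zs_big s : (s = 1 \/ s = -1) -> ~~ spectrum (T_kernel adj w1) s ->
  (exists psi, (exists e, psi e != 0) /\ (forall e, psi (arev Hsym e) = - s * psi e) /\
      forall u, dop c psi u = 0) ->
  (#|V| < #|edges adj|)%N.
Proof.
move=> Hs HnT Z.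
have Hss : s * s = 1 by case: Hs => ->; rewrite ?mulrNN mulr1.
have cs : s^* = s.
  case: Hs => ->; first exact: conjc1.
  by rewrite rmorphN; congr (- _); exact: conjc1.
apply: (big_of_Z Hirr Hss _ Z) => g Hcond u.
apply/eqP; apply: contraNT HnT => Hu.
apply/specT; exists (fun v => (g v)^*); split; first by exists u; rewrite conjc_eq0.
move=> v; rewrite /Mop -[RHS]mulr1 -(HddA v) mulr_sumr; apply: eq_bigr => e /eqP <-.
have := congr1 conjc (Hcond (arev Hsym e)).
rewrite ao_rev at_rev arevK !rmorphM /= cs /c /a !conjcK /= => H.
rewrite -mulrA [w1 _ _ * _]mulrC H /c /a; ring.
Qed.

Lemma phis (s : C) : (s = 1 \/ s = -1) -> phi1 s = s.
Proof.
have e2 : (1 + 1 : C) / 2 = 1 by rewrite -[1 + 1]/(2%:R : C) mulfV // H2C.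
case=> ->; rewrite /phi1 ?invr1 ?invrN1 //.
by rewrite -opprD mulNr e2.
Qed.

Lemma partA : let n (s : R[i]) : int :=
       (#|edges adj|%:Z - #|V|%:Z + (spectrum (T_kernel adj w1) s)%:Z)%R in
     forall x : R[i],
       spectrum (U1_kernel adj w1) x <->
       [\/ preim_nz (@phi1 R) (spectrum (T_kernel adj w1)) x,
           x = 1 /\ (0 < n 1)%R
         | x = -1 /\ (0 < n (-1))%R].
Proof.
move=> n x.
have Hn : forall s, ~~ spectrum (T_kernel adj w1) s ->
    (0 < n s)%R <-> (#|V| < #|edges adj|)%N.
  move=> s Hns; rewrite /n (negbTE Hns) addr0 subr_gt0 ltz_nat //.
rewrite specU1 (core_iff Hsym H2C HddA x).
split.
  case => [[xnz HM]|[Hx Z]].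
    by constructor 1; rewrite /preim_nz xnz andTb; apply/specT; exact: HM.
  case: (boolP (spectrum (T_kernel adj w1) x)) => HT.
    constructor 1; rewrite /preim_nz (phis Hx) HT andbT.
    by case: Hx => ->; rewrite ?oppr_eq0 oner_eq0.
  have := Zs_big Hx HT Z => /(Hn _ HT) Hlt.
  case: Hx => Hx; [constructor 2|constructor 3]; (split; first exact: Hx);
    rewrite -Hx; exact: Hlt.
case => [/andP [xnz HT]|[Hx Hn1]|[Hx Hn1]].
- by left; split; [exact: xnz | move/specT: HT].
- case: (boolP (spectrum (T_kernel adj w1) x)) => HT.
    left; split; first by rewrite Hx oner_eq0.
    by apply/specT; rewrite -[phig x]/(phi1 x) (phis (or_introl Hx)).
  right; split; first by left.
  have Hss : x * x = 1 by rewrite Hx mulr1.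
  apply: (Z_of_big Hsym Hirr c Hss).
  by apply/(Hn _ HT); rewrite Hx.
- case: (boolP (spectrum (T_kernel adj w1) x)) => HT.
    left; split; first by rewrite Hx oppr_eq0 oner_eq0.
    by apply/specT; rewrite -[phig x]/(phi1 x) (phis (or_intror Hx)).
  right; split; first by right.
  have Hss : x * x = 1 by rewrite Hx mulrNN mulr1.
  apply: (Z_of_big Hsym Hirr c Hss).
  by apply/(Hn _ HT); rewrite Hx.
Qed.

End PartA.

Section PartB.
Local Open Scope complex_scope.
Variables (R : realType) (V : finType) (adj : rel V) (Hsym : symmetric adj) (Hirr : irreflexive adj).
Hypothesis Hconn : connected_graph adj.
Local Notation A := (garc adj).
Local Notation C := R[i].
Variables (w2 : V -> V -> R) (mV : V -> R).
Hypothesis Hpos : forall e : garc adj, 0 < w2 (val e).1 (val e).2.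
Hypothesis Hsum : forall u : V, \sum_(e : garc adj | (val e).1 == u) w2 (val e).1 (val e).2 = 1.
Hypothesis HmV : forall u : V, 0 < mV u.
Hypothesis Hrev : forall e : garc adj,
        mV (val e).1 * w2 (val e).1 (val e).2 = mV (val e).2 * w2 (val e).2 (val e).1.

Let c := fun e : A => (w2 (ao e) (at_ e))%:C.
Let a := fun e : A => (1 : C).

Lemma HddB u : \sum_(e | ao e == u) c e * a e = 1.
Proof.
transitivity ((\sum_(e : A | ao e == u) w2 (ao e) (at_ e))%:C).
  by rewrite rmorph_sum; apply: eq_bigr => e _; rewrite /a mulr1.
by rewrite Hsum.
Qed.

Lemma U2_sum psi e : \sum_f U2_kernel adj w2 e f * psi f = Uop Hsym c a psi e.
Proof.
rewrite /U2_kernel (kernel_sum Hsym (fun f => 2 * (w2 (val f).2 (val f).1)%:C)).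
rewrite /Uop /dop mulr_sumr; congr (_ - _); apply: eq_bigr => g _ /=.
rewrite /c /a /ao /at_ /=; ring.
Qed.

Lemma specU2 x : spectrum (U2_kernel adj w2) x <->
  exists psi, (exists e, psi e != 0) /\ forall e, Uop Hsym c a psi e = x * psi e.
Proof.
rewrite spec_right; split => -[psi [Hnz H]]; exists psi; split => // e;
  by rewrite -?H U2_sum ?H.
Qed.

Lemma specL mu : spectrum (L_kernel adj w2) mu <->
  exists g, (exists u, g u != 0) /\ forall u, Mop Hsym c a g u = (mu + 1) * g u.
Proof.
have E : forall g u, \sum_v L_kernel adj w2 u v * g v = Mop Hsym c a g u - g u.
  move=> g u; rewrite /L_kernel.
  transitivity (\sum_v (\sum_(e : A | ((val e).1 == u) && ((val e).2 == v)) (w2 (val e).1 (val e).2)%:C) * g v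
     - \sum_v (u == v)%:R * g v).
    by rewrite -sumrB; apply: eq_bigr => v _; rewrite mulrBl.
  rewrite partition_sum2; congr (_ - _).
    by apply: eq_bigr => e _; rewrite /c /a mulr1.
  rewrite (bigD1 u) //= eqxx mul1r big1 ?addr0 // => v Hv.
  by rewrite eq_sym (negPf Hv) mul0r.
rewrite spec_right; split => -[g [Hnz H]]; exists g; split => // u.
  by move: (H u); rewrite E => /eqP; rewrite subr_eq => /eqP ->; ring.
by rewrite E H; ring.
Qed.

Lemma Sdef x : preim_nz (@phi2 R) (spectrum (L_kernel adj w2)) x <->
  x != 0 /\ exists g, (exists u, g u != 0) /\ forall u, Mop Hsym c a g u = phig x * g u.
Proof.
rewrite /preim_nz; split.
  by move=> /andP [xnz /specL]; rewrite /phi2 subrK => H; split.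
move=> [xnz H]; rewrite xnz andTb; apply/specL; rewrite /phi2 subrK; exact: H.
Qed.

Lemma H2B : (2 : C) != 0. Proof. by rewrite pnatr_eq0. Qed.

Lemma phigs (s : C) : (s = 1 \/ s = -1) -> phig s = s.
Proof.
have e2 : (1 + 1 : C) / 2 = 1 by rewrite -[1 + 1]/(2%:R : C) mulfV // H2B.
case=> ->; rewrite /phig ?invr1 ?invrN1 //.
by rewrite -opprD mulNr e2.
Qed.

Lemma S1 : preim_nz (@phi2 R) (spectrum (L_kernel adj w2)) 1.
Proof.
apply/Sdef; split; first exact: oner_neq0.
have [_ /card_gt0P [u _] _] : [/\ (0 < #|V|)%N, (0 < #|V|)%N & True].
  by case: Hconn => H _; split.
exists (fun _ => 1); split; first by exists u; exact: oner_neq0.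
move=> v; rewrite phigs; last by left.
rewrite mul1r /Mop; transitivity (\sum_(e | ao e == v) c e * a e); last exact: HddB v.
by apply: eq_bigr => e _; rewrite /a !mulr1.
Qed.

Lemma Sbip : bipartite adj -> preim_nz (@phi2 R) (spectrum (L_kernel adj w2)) (-1).
Proof.
move=> [col Hcol].
apply/Sdef; split; first by rewrite oppr_eq0 oner_neq0.
have [_ /card_gt0P [u _] _] : [/\ (0 < #|V|)%N, (0 < #|V|)%N & True].
  by case: Hconn => H _; split.
exists (fun v => if col v then 1 else -1 : C); split.
  by exists u; case: (col u); rewrite ?oppr_eq0 oner_neq0.
move=> v; rewrite phigs; last by right.
have HH : forall k : C, k = k * \sum_(e | ao e == v) c e * a e.
  by move=> k; rewrite HddB mulr1.
rewrite /Mop [RHS]HH mulr_sumr; apply: eq_bigr => e /eqP <-.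
have := Hcol _ _ (valP e); rewrite /a -/(ao e) -/(at_ e).
by case: (col (ao e)); case: (col (at_ e)) => //= _; ring.
Qed.

Lemma Zneg_big : ~~ preim_nz (@phi2 R) (spectrum (L_kernel adj w2)) (-1) ->
  (exists psi, (exists e, psi e != 0) /\ (forall e, psi (arev Hsym e) = - (-1) * psi e) /\
      forall u, dop c psi u = 0) ->
  (#|V| < #|edges adj|)%N.
Proof.
move=> HnS Z.
have Hss : (-1 : C) * (-1) = 1 by rewrite mulrNN mulr1.
apply: (big_of_Z Hirr Hss _ Z) => g Hcond u.
apply/eqP; apply: contraNT HnS => Hu.
have Mnz : forall v, (mV v)%:C != 0 :> C.
  by move=> v; rewrite eq_complex /= eqxx andbT gt_eqF.
apply/Sdef; split; first by rewrite oppr_eq0 oner_neq0.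
exists (fun v => g v / (mV v)%:C); split.
  by exists u; rewrite mulf_neq0 // invr_neq0.
move=> v; rewrite phigs; last by right.
have HH : forall k : C, k = k * \sum_(e | ao e == v) c e * a e.
  by move=> k; rewrite HddB mulr1.
rewrite /Mop [RHS]HH mulr_sumr; apply: eq_bigr => e /eqP <-.
rewrite /a /c.
set W := (w2 (ao e) (at_ e))%:C.
set W' := (w2 (at_ e) (ao e))%:C.
set Mu := (mV (ao e))%:C.
set Mv := (mV (at_ e))%:C.
have H1 : g (ao e) * W = -1 * g (at_ e) * W' by exact: Hcond.
have H2 : Mu * W = Mv * W'.
  by rewrite /Mu /W /Mv /W' -!rmorphM /=; congr (_%:C); exact: Hrev.
have E : W * g (at_ e) * Mu = - (W * g (ao e) * Mv).
  transitivity (g (at_ e) * (Mu * W)); first by ring.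
  rewrite H2; transitivity (- Mv * (g (ao e) * W)); last by ring.
  by rewrite H1; ring.
have Mu0 := Mnz (ao e); have Mv0 := Mnz (at_ e).
transitivity (W * g (at_ e) * Mu / (Mu * Mv)).
  by field; rewrite Mu0 Mv0.
by rewrite E; field; rewrite Mu0 Mv0.
Qed.

Let SS := preim_nz (@phi2 R) (spectrum (L_kernel adj w2)).

Lemma bwdS x : SS x -> spectrum (U2_kernel adj w2) x.
Proof.
move/Sdef => H; apply/specU2; apply/(core_iff Hsym H2B HddB x); by left.
Qed.

Lemma bwdneg : (#|V| < #|edges adj|)%N -> spectrum (U2_kernel adj w2) (-1).
Proof.
move=> Hlt; apply/specU2; apply/(core_iff Hsym H2B HddB (-1)); right; split; first by right.
have Hss : (-1 : C) * (-1) = 1 by rewrite mulrNN mulr1.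
exact: (Z_of_big Hsym Hirr c Hss Hlt).
Qed.

Lemma fwdB x : spectrum (U2_kernel adj w2) x -> SS x \/ (x = -1 /\ (#|V| < #|edges adj|)%N).
Proof.
move/specU2/(core_iff Hsym H2B HddB x) => [H|[[Hx|Hx] Z]].
- by left; apply/Sdef.
- by left; rewrite Hx; exact: S1.
- case: (boolP (SS (-1))) => HS; first by left; rewrite Hx.
  right; split => //; apply: Zneg_big HS _.
  by rewrite -Hx.
Qed.

Lemma partB x :
  [/\ (#|edges adj| + 1 = #|V|)%N ->
         (spectrum (U2_kernel adj w2) x <-> SS x),
       (#|edges adj| = #|V|)%N /\ ~ bipartite adj ->
         (spectrum (U2_kernel adj w2) x <-> SS x \/ x = 1)
     & ~ (#|edges adj| + 1 = #|V|)%N ->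
       ~ ((#|edges adj| = #|V|)%N /\ ~ bipartite adj) ->
         (spectrum (U2_kernel adj w2) x <-> [\/ SS x, x = 1 | x = -1])].
Proof.
have tb : (#|V| <= #|edges adj| + 1)%N.
  by case: Hconn => H1 H2; exact: (@tree_bound _ _ Hsym Hirr C H1 H2).
split.
- move=> Ht; split; last exact: bwdS.
  case/fwdB => // -[_ Hlt]; exfalso; move: Hlt; rewrite -Ht; lia.
- move=> [Heq _]; split.
    case/fwdB; first by left.
    by move=> [_ Hlt]; exfalso; move: Hlt; rewrite Heq ltnn.
  case; first exact: bwdS.
  move=> ->; apply: bwdS; exact: S1.
- move=> H1 H2; split.
    by case/fwdB => [H|[Hx _]]; [constructor 1|constructor 3].
  case=> [H|->|->]; first exact: bwdS.
    by apply: bwdS; exact: S1.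
  case: (boolP (SS (-1))) => HS; first exact: bwdS.
  apply: bwdneg.
  have Hne : #|V| <> #|edges adj|.
    move=> Heq; apply: H2; split; first by rewrite Heq.
    by move=> Hb; move/negP: HS; apply; exact: Sbip.
  lia.
Qed.

End PartB.

Unset Implicit Arguments.

Theorem proposition3 (R : realType) (V : finType) (adj : rel V)
  (Hsimple : simple_graph adj) (Hconn : connected_graph adj) :
  (* (a) *)
  (forall w1 : V -> V -> R[i],
     (forall u : V,
        \sum_(e : garc adj | (val e).1 == u) `|w1 (val e).1 (val e).2| ^+ 2 = 1) ->
     let n (s : R[i]) : int :=
       (#|edges adj|%:Z - #|V|%:Z + (spectrum (T_kernel adj w1) s)%:Z)%R in
     forall x : R[i],
       spectrum (U1_kernel adj w1) x <->
       [\/ preim_nz (@phi1 R) (spectrum (T_kernel adj w1)) x,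
           x = 1 /\ (0 < n 1)%R
         | x = -1 /\ (0 < n (-1))%R]) /\
  (* (b) *)
  (forall (w2 : V -> V -> R) (mV : V -> R),
     (forall e : garc adj, 0 < w2 (val e).1 (val e).2) ->
     (forall u : V, \sum_(e : garc adj | (val e).1 == u) w2 (val e).1 (val e).2 = 1) ->
     (forall u : V, 0 < mV u) ->
     (forall e : garc adj,
        mV (val e).1 * w2 (val e).1 (val e).2 = mV (val e).2 * w2 (val e).2 (val e).1) ->
     let S := preim_nz (@phi2 R) (spectrum (L_kernel adj w2)) in
     forall x : R[i],
       [/\ (#|edges adj| + 1 = #|V|)%N ->
              (spectrum (U2_kernel adj w2) x <-> S x),
            (#|edges adj| = #|V|)%N /\ ~ bipartite adj ->
              (spectrum (U2_kernel adj w2) x <-> S x \/ x = 1)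
          & ~ (#|edges adj| + 1 = #|V|)%N ->
            ~ ((#|edges adj| = #|V|)%N /\ ~ bipartite adj) ->
              (spectrum (U2_kernel adj w2) x <-> [\/ S x, x = 1 | x = -1])]).
Proof.
case: Hsimple => Hsym Hirr.
split.
  move=> w1 Hw; exact: (partA Hsym Hirr Hw).
move=> w2 mV Hp Hs Hm Hr S x; exact: (partB Hsym Hirr Hconn Hs Hm Hr x).
Qed.
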